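(* Let $n>5$ be prime and let $\gamma$ be a probability distribution on $\mathbb{Z}_n$ with $\gamma(k)\in\mathbb{Q}$ for all $k$. Suppose $\hat{\gamma}(x)=\hat{\gamma}(y)$ for some $x,y\in\mathbb{Z}_n\setminus\{0\}$, and let $f_1,f_2:\mathbb{Z}_n\to\{0,1\}$ satisfy $f_1(k)=f_2(x^{-1}yk)$ for all $k$ (operations in the field $\mathbb{Z}_n$). Then, for the random walk $v(t)$ with step distribution $\gamma$, the sequences $\{f_1(v(t))\}_{t\ge1}$ and $\{f_2(v(t))\}_{t\ge1}$ have the same distribution.
   Context: $\hat{\gamma}(x)=\sum_{k\in\mathbb{Z}_n}\omega_n^{kx}\gamma(k)$ with $\omega_n=e^{-2\pi i/n}$. The random walk $v(t)$ has $v(1)$ uniform on $\mathbb{Z}_n$ and independent steps with $\mathbb{P}(v(t+1)-v(t)=k)=\gamma(k)$. *)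

(* Defs.v *)
From HB Require Import structures.
From mathcomp Require Import all_boot all_order all_algebra.
From mathcomp Require Import reals trigo.
From mathcomp Require Import complex.
Set Implicit Arguments. Unset Strict Implicit. Unset Printing Implicit Defensive.
Import Order.TTheory GRing.Theory Num.Theory.
Local Open Scope ring_scope.
Local Open Scope complex_scope.

Definition omega (R : realType) (n : nat) : R[i] :=
  (cos (2 * pi / n%:R) +i* (- sin (2 * pi / n%:R)))%C.

(* Fourier transform  ghat(x) = sum_k omega_n^{k x} gamma(k) ; elements of
   'F_n are ordinals, k x is computed in nat (omega_n^n = 1). *)
Definition ghat (R : realType) (n : nat) (gamma : 'F_n -> rat) (x : 'F_n) : R[i] :=
  \sum_(k : 'F_n) omega R n ^+ (nat_of_ord k * nat_of_ord x)%N * ratr (gamma k).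

Definition is_distr (n : nat) (gamma : 'F_n -> rat) : Prop :=
  (forall k, 0 <= gamma k) /\ \sum_(k : 'F_n) gamma k = 1.

(* Probability that (f(v(1)), ..., f(v(T+1))) = w for the random walk
   with v(1) uniform on Z_n and i.i.d. steps v(t+1)-v(t) of law gamma.
   Paths are indexed by 'I_T.+1 (index i corresponds to time t = i+1). *)
Definition walk_fdd (n : nat) (gamma : 'F_n -> rat) (f : 'F_n -> bool)
    (T : nat) (w : 'I_T.+1 -> bool) : rat :=
  \sum_(p : {ffun 'I_T.+1 -> 'F_n})
     (n%:R)^-1
     * (\prod_(i < T) gamma (p (lift ord0 i) - p (widen_ord (leqnSn T) i)))
     * (\prod_(i < T.+1) (f (p i) == w i)%:R).

(* The processes (f1(v(t)))_{t>=1} and (f2(v(t)))_{t>=1} have the same law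
   on {0,1}^N, i.e. all their finite-dimensional distributions agree. *)
Definition same_law (n : nat) (gamma : 'F_n -> rat) (f1 f2 : 'F_n -> bool) : Prop :=
  forall (T : nat) (w : 'I_T.+1 -> bool),
    walk_fdd gamma f1 w = walk_fdd gamma f2 w.

(* Main.v *)
Require Import Defs.
From HB Require Import structures.
From mathcomp Require Import all_boot all_order all_algebra.
From mathcomp Require Import reals trigo.
From mathcomp Require Import complex.
From mathcomp Require Import ring lra.
From mathcomp Require Import algC cyclotomic.
Import Order.TTheory GRing.Theory Num.Theory.
Local Open Scope ring_scope.
Definition Phi (n : nat) : {poly rat} := \poly_(i < n) 1.

Lemma size_Phi n : (0 < n)%N -> size (Phi n) = n.
Proof. by move=> n0; rewrite size_poly_eq // oner_eq0. Qed.

Lemma Phi_root (F : numFieldType) (w : F) n : (0 < n)%N ->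
  w ^+ n = 1 -> w != 1 -> root (map_poly ratr (Phi n)) w.
Proof.
move=> n0 wn w1; rewrite /root horner_coef size_map_poly size_Phi //.
have : (w - 1) * \sum_(i < n) w ^+ i = 0 by rewrite -subrX1 wn subrr.
move/eqP; rewrite mulf_eq0 subr_eq0 (negbTE w1) /= => /eqP S.
apply/eqP; rewrite -[RHS]S; apply: eq_bigr => i _.
by rewrite coef_map coef_poly ltn_ord /= rmorph1 mul1r.
Qed.

Lemma Phi_dvd n (np : prime n) (F : numFieldType) (w : F) :
  w ^+ n = 1 -> w != 1 ->
  forall q : {poly rat}, root (map_poly ratr q) w -> Phi n %| q.
Proof.
move=> wn w1 q rq.
have n0 := prime_gt0 np.
have [z pz] := C_prim_root_exists n0.
have [p [Hm0 monp] Hd0] := minCpolyP z.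
have Hm : minCpoly z = map_poly (@ratr algC) p := Hm0.
have Hd : forall q, root (map_poly (@ratr algC) q) z = (p %| q) := Hd0.
have sp : size p = n.
  have := congr1 (fun r : {poly algC} => size r) Hm => /=; rewrite size_map_poly => <-.
  rewrite (minCpoly_cyclotomic pz) size_cyclotomic.
  by rewrite totient_prime // prednK.
have z1 : z != 1.
  apply/negP => /eqP e; move: (prim_order_dvd pz 1); rewrite e expr1 eqxx.
  by rewrite dvdn1 => /eqP e1; rewrite e1 in np.
have zn : z ^+ n = 1 by apply: prim_expr_order.
have rz := @Phi_root _ z n n0 zn z1.
have pPhi : p %| Phi n by rewrite -Hd.
have eqp : p %= Phi n by rewrite -dvdp_size_eqp // sp size_Phi.
have Phi0 : Phi n != 0 by rewrite -size_poly_eq0 size_Phi // -lt0n.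
set g := gcdp q (Phi n).
have gPhi : g %| Phi n by apply: dvdp_gcdr.
set h := Phi n %/ g.
have hg : h * g = Phi n by apply: divpK.
have : root (map_poly (@ratr algC) (h * g)) z by rewrite hg.
rewrite rmorphM rootM => /orP [rh | rg].
  have Ph : Phi n %| h by rewrite -(eqp_dvdl _ eqp) -Hd.
  have h0 : h != 0 by apply: contraNneq Phi0; rewrite -hg => ->; rewrite mul0r.
  have g0 : g != 0 by apply: contraNneq Phi0; rewrite -hg => ->; rewrite mulr0.
  have := dvdp_leq h0 Ph; rewrite -hg size_mul //.
  move=> sz.
  have sg : (size g <= 1)%N.
    have : (0 < size h)%N by rewrite size_poly_gt0.
    move: sz; case: (size h) => // k; case: (size g) => // [[|m]] //.
    by move=> H _; move: H; rewrite addSn /= !addnS ltnS ltnNge leq_addr.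
  have rgw : root (map_poly ratr g) w.
    by rewrite /g gcdp_map root_gcd rq (@Phi_root _ w n n0 wn w1).
  have := root_size_gt1 _ rgw.
  rewrite size_map_poly map_poly_eq0 g0 ltnNge sg => /(_ isT) //.
have Pg : Phi n %| g by rewrite -(eqp_dvdl _ eqp) -Hd.
exact: dvdp_trans Pg (dvdp_gcdl _ _).
Qed.
Section Om.
Variable R : realType.
Variable n : nat.
Let th : R := 2 * pi / n%:R.

Local Open Scope complex_scope.
Lemma omega_exp k : omega R n ^+ k = (cos (k%:R * th) +i* (- sin (k%:R * th))).
Proof.
elim: k => [|k IH]; first by rewrite expr0 mul0r cos0 sin0 oppr0.
rewrite exprS IH /omega -/th.
rewrite mulrSr mulrDl mul1r addrC cosD sinD.
apply/eqP; rewrite eq_complex /=; apply/andP; split; apply/eqP; ring.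
Qed.

Lemma piineq : (2 < n)%N -> th < pi.
Proof.
move=> n2; have n0 : 0 < n%:R :> R by rewrite ltr0n; case: n n2.
rewrite /th ltr_pdivrMr // mulrC ltr_pM2l ?pi_gt0 // ltr_nat //.
Qed.

Lemma omega_n : (0 < n)%N -> omega R n ^+ n = 1.
Proof.
move=> n0; rewrite omega_exp /th.
have -> : n%:R * (2 * pi / n%:R) = pi *+ 2 :> R.
  rewrite mulrC divfK ?mulr_natl // pnatr_eq0 -lt0n //.
by rewrite cos2pi sin2pi oppr0.
Qed.

Lemma omega_neq1 : (2 < n)%N -> omega R n != 1.
Proof.
move=> n2; apply/eqP => e; have := congr1 (fun z : R[i] => complex.Im z) e; rewrite /omega /= -/th.
move/eqP; rewrite oppr_eq0; apply/negP; rewrite gt_eqF // sin_gt0_pi //.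
rewrite piineq // andbT /th divr_gt0 ?mulr_gt0 ?pi_gt0 ?ltr0n //.
by case: n n2.
Qed.
End Om.
Lemma valFmul n (np : prime n) (a b : 'F_n) : val (a * b) = ((val a * val b) %% n)%N.
Proof. rewrite /=. by congr (_ %% _)%N; rewrite Fp_cast. Qed.

Lemma exp_mod (F : pzRingType) (w : F) n m : w ^+ n = 1 -> w ^+ m = w ^+ (m %% n)%N.
Proof.
by move=> wn; rewrite {1}(divn_eq m n) exprD mulnC exprM wn expr1n mul1r.
Qed.

Lemma indep n (np : prime n) (F : numFieldType) (w : F) :
  w ^+ n = 1 -> w != 1 -> forall e : 'F_n -> rat,
  \sum_(m : 'F_n) w ^+ (val m) * ratr (e m) = 0 ->
  \sum_(m : 'F_n) e m = 0 -> forall m, e m = 0.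
Proof.
move=> wn w1 e Hs He.
have n0 := prime_gt0 np.
have vlt : forall m : 'F_n, (val m < n)%N.
  by move=> m; rewrite -[X in (_ < X)%N](Fp_cast np) ltn_ord.
set q : {poly rat} := \sum_(m : 'F_n) e m *: 'X^(val m).
have cq : forall m : 'F_n, q`_(val m) = e m.
  move=> m; rewrite /q coef_sum (bigD1 m) //= coefZ coefXn eqxx mulr1.
  rewrite big1 ?addr0 // => j jm; rewrite coefZ coefXn.
  by case: eqP => [/val_inj e1 | _]; [rewrite e1 eqxx in jm | rewrite mulr0].
have rq : root (map_poly ratr q) w.
  rewrite /root /q rmorph_sum horner_sum -[X in _ == X]Hs; apply/eqP.
  by apply: eq_bigr => m _; rewrite /= map_polyZ map_polyXn hornerZ hornerXn mulrC.
have /dvdpP [d Hd] := @Phi_dvd n np F w wn w1 q rq.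
have sq : (size q <= n)%N.
  rewrite /q; apply: (leq_trans (size_sum _ _ _)).
  apply/bigmax_leqP => m _; apply: (leq_trans (size_scale_leq _ _)).
  by rewrite size_polyXn.
have Phi0 : Phi n != 0 by rewrite -size_poly_eq0 size_Phi // -lt0n.
have sd : (size d <= 1)%N.
  have [->|d0] := eqVneq d 0; first by rewrite size_poly0.
  move: sq; rewrite Hd size_mul // size_Phi //.
  have : (0 < size d)%N by rewrite size_poly_gt0.
  case: (size d) => // k _; case: k => // k.
  by move=> H; exfalso; move: H; rewrite addSn ltnNge leq_addl.
have Hd' : q = d`_0 *: Phi n by rewrite Hd {1}(size1_polyC sd) mul_polyC.
have ec : forall m, e m = d`_0.
  by move=> m; rewrite -cq Hd' coefZ coef_poly vlt mulr1.
have : \sum_(m : 'F_n) e m = n%:R * d`_0.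
  by rewrite (eq_bigr _ (fun m _ => ec m)) sumr_const card_Fp // mulr_natl.
rewrite He => /esym /eqP; rewrite mulf_eq0 pnatr_eq0 eqn0Ngt n0 /= => /eqP d00.
by move=> m; rewrite ec.
Qed.

Theorem lemma2 (R : realType) (n : nat) (n_prime : prime n) (n_gt5 : (5 < n)%N)
    (gamma : 'F_n -> rat) (gamma_distr : is_distr gamma)
    (x y : 'F_n) (x_nz : x != 0) (y_nz : y != 0)
    (hxy : ghat R gamma x = ghat R gamma y)
    (f1 f2 : 'F_n -> bool)
    (hf : forall k : 'F_n, f1 k = f2 (x^-1 * y * k)) :
  same_law gamma f1 f2.
Proof.
have n0 := prime_gt0 n_prime.
have n2 : (2 < n)%N by apply: ltn_trans n_gt5.
set w := omega R n.
have wn : w ^+ n = 1 by apply: omega_n.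
have w1 : w != 1 by apply: omega_neq1.
have ghE : forall z : 'F_n, z != 0 -> ghat R gamma z =
    \sum_(m : 'F_n) w ^+ (val m) * ratr (gamma (m / z)).
  move=> z z0; rewrite /ghat (reindex_inj (mulIf (invr_neq0 z0))).
  have key : forall a b : 'F_n, w ^+ (val a * val b) = w ^+ val (a * b).
    by move=> a b; rewrite (@valFmul n n_prime a b) -(@exp_mod _ w n _ wn).
  apply: eq_bigr => m _; cbv beta; rewrite key divfK //.
set c := x^-1 * y.
have c0 : c != 0 by rewrite mulf_neq0 // invr_eq0.
have gc : forall k, gamma (c * k) = gamma k.
  pose e m := gamma (m / x) - gamma (m / y).
  have He : forall m, e m = 0.
    apply: (@indep n n_prime _ w wn w1).
      rewrite -[RHS](subrr (ghat R gamma x)) {2}hxy !ghE // -sumrB.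
      by apply: eq_bigr => m _; rewrite /e rmorphB mulrBr.
    rewrite /e sumrB.
    have sg : forall z : 'F_n, z != 0 -> \sum_(m : 'F_n) gamma (m / z) = \sum_(m : 'F_n) gamma m.
      move=> z z0; rewrite (reindex_inj (mulIf z0)).
      by apply: eq_bigr => m _; rewrite mulfK.
    by rewrite !sg // subrr.
  move=> k; have := He (y * k); rewrite /e => /eqP; rewrite subr_eq0 => /eqP.
  have -> : y * k / y = k by rewrite mulrC mulrA mulVf // mul1r.
  move=> <-; congr gamma; rewrite /c; ring.
move=> T wv; rewrite /walk_fdd.
have hinj : injective (fun p : {ffun 'I_T.+1 -> 'F_n} => [ffun i => c * p i]).
  move=> p1 p2 /ffunP H; apply/ffunP => i; have := H i; rewrite !ffunE.
  exact: mulfI.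
rewrite [RHS](reindex_inj hinj) /=; apply: eq_bigr => p _.
congr (_ * _ * _).
  by apply: eq_bigr => i _; rewrite !ffunE -mulrBr gc.
by apply: eq_bigr => i _; rewrite ffunE hf.
Qed.
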